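(* Let $\epsilon\in(0,1)$, $h>0$, $u_0\in\mathbb{R}$, and let $(u_n)_{n\ge0}$ be generated by the explicit Euler scheme $$\frac{u_n-u_{n-1}}{h}+\frac{1}{\epsilon^2}\big(u_{n-1}^3-u_{n-1}\big)=0,\qquad n\ge 1.$$ (i) If $u_0\in\{0,1,-1\}$, then $u_n=\mathrm{sign}(u_0)$ for all $n\ge1$, for any $h>0$ and any $\epsilon$. (ii) If $u_0\notin\{0,1,-1\}$, define $h^*=h^*(u_0,\epsilon)=\frac{\epsilon^2}{u_0^2+|u_0|}$ if $|u_0|>1$ and $h^*=\frac{\epsilon^2}{2}$ if $0<|u_0|<1$. Then $h^*>0$, and for every $h\in(0,h^*]$ the sequence $(u_n)$ is monotone and converges to $\mathrm{sign}(u_0)$ as $n\to\infty$.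
   Context: The scheme discretizes the ODE $u'(t)+\frac{1}{\epsilon^2}(u^3-u)=0$, $u(0)=u_0$. Here $\mathrm{sign}(0)=0$, $\mathrm{sign}(x)=1$ for $x>0$, $\mathrm{sign}(x)=-1$ for $x<0$. *)

(* Defs.v *)
From Stdlib Require Import Reals.
Open Scope R_scope.

Definition sign (x : R) : R :=
  if Rlt_dec 0 x then 1 else if Rlt_dec x 0 then -1 else 0.

Fixpoint euler (eps h u0 : R) (n : nat) : R :=
  match n with
  | O => u0
  | S k => let v := euler eps h u0 k in v - h / eps ^ 2 * (v ^ 3 - v)
  end.

Definition hstar (u0 eps : R) : R :=
  if Rlt_dec 1 (Rabs u0) then eps ^ 2 / (u0 ^ 2 + Rabs u0) else eps ^ 2 / 2.

(* Main.v *)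
Require Import Defs.
From Stdlib Require Import Reals Lra Psatz.
Open Scope R_scope.

Lemma geo_cv (u : nat -> R) (l r c : R) :
  0 <= r < 1 -> (forall n, Rabs (u n - l) <= r ^ n * c) -> Un_cv u l.
Proof.
  intros Hr Hb e He.
  assert (Hc : 0 <= c) by (specialize (Hb O); simpl in Hb;
    pose proof (Rabs_pos (u O - l)); lra).
  assert (Hr' : Rabs r < 1) by (rewrite Rabs_right; lra).
  destruct (pow_lt_1_zero r Hr' (e / (c + 1))) as [N HN].
  { apply Rdiv_lt_0_compat; lra. }
  exists N. intros n Hn. unfold Rdist.
  eapply Rle_lt_trans; [apply Hb|].
  specialize (HN n Hn). rewrite Rabs_right in HN by (apply Rle_ge, pow_le; lra).
  assert (0 <= r ^ n) by (apply pow_le; lra).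
  assert (r ^ n * (c + 1) < e).
  { apply (Rmult_lt_compat_r (c+1)) in HN; [|lra].
    replace (e / (c + 1) * (c + 1)) with e in HN by (field; lra). lra. }
  nra.
Qed.

Lemma small_case (u : nat -> R) (k : R) (Hk : 0 < k) (Hk2 : k * 2 <= 1)
  (Hrec : forall n, u (S n) = u n - k * (u n ^ 3 - u n)) (H0 : 0 < u O < 1) :
  forall n, (u O <= u n < 1 /\ u n <= u (S n)) /\
    Rabs (u n - 1) <= (1 - k * u O * (1 + u O)) ^ n * (1 - u O).
Proof.
  remember (u O) as a eqn:Ha.
  assert (Hr : 0 < 1 - k * a * (1 + a)).
  { assert (a * (1 + a) < 2) by nra. nra. }
  assert (Hinv : forall n, a <= u n < 1 /\
     1 - u n <= (1 - k * a * (1 + a)) ^ n * (1 - a)).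
  { induction n as [|n IH].
    - simpl. split; [split|]; lra.
    - destruct IH as [[H1 H2] H3]. rewrite Hrec. set (v := u n) in *.
      assert (Hv : 0 < v) by lra.
      assert (Hp : 0 <= k * v * (1 - v * v)) by
        (apply Rmult_le_pos; [nra|nra]).
      assert (Hq : k * v * (1 + v) < 1) by
        (assert (v * (1 + v) < 2) by nra; nra).
      assert (Hq2 : k * a * (1 + a) <= k * v * (1 + v)) by
        (assert (a * (1 + a) <= v * (1 + v)) by nra; nra).
      assert (E : 1 - (v - k * (v ^ 3 - v)) = (1 - v) * (1 - k * v * (1 + v))) by ring.
      split; [split|].
      + assert (v - k * (v ^ 3 - v) = v + k * v * (1 - v * v)) by ring. lra.
      + assert (0 < (1 - v) * (1 - k * v * (1 + v))) by (apply Rmult_lt_0_compat; lra).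
        lra.
      + rewrite E. simpl.
        assert ((1 - v) * (1 - k * v * (1 + v)) <= (1 - v) * (1 - k * a * (1 + a))) by
          (apply Rmult_le_compat_l; lra).
        assert ((1 - v) * (1 - k * a * (1 + a)) <=
                ((1 - k * a * (1 + a)) ^ n * (1 - a)) * (1 - k * a * (1 + a))) by
          (apply Rmult_le_compat_r; lra).
        lra. }
  intros n. destruct (Hinv n) as [[H1 H2] H3]. split; [split; [lra|]|].
  - rewrite Hrec. set (v := u n) in *.
    assert (0 <= k * v * (1 - v * v)) by (apply Rmult_le_pos; nra).
    assert (v - k * (v ^ 3 - v) = v + k * v * (1 - v * v)) by ring. lra.
  - rewrite Rabs_left1 by lra. lra.
Qed.

Lemma large_case (u : nat -> R) (k : R) (Hk : 0 < k)
  (Hrec : forall n, u (S n) = u n - k * (u n ^ 3 - u n)) (H0 : 1 < u O)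
  (Hk2 : k * (u O ^ 2 + u O) <= 1) :
  forall n, (u (S n) <= u n) /\
    Rabs (u n - 1) <= (1 - 2 * k) ^ n * (u O - 1).
Proof.
  remember (u O) as a eqn:Ha.
  assert (Hr : 0 <= 1 - 2 * k).
  { assert (2 <= a ^ 2 + a) by nra. nra. }
  assert (Hinv : forall n, 1 <= u n <= a /\
     u n - 1 <= (1 - 2 * k) ^ n * (a - 1)).
  { induction n as [|n IH].
    - simpl. split; [split|]; lra.
    - destruct IH as [[H1 H2] H3]. rewrite Hrec. set (v := u n) in *.
      assert (Hp : 0 <= k * v * (v * v - 1)) by
        (apply Rmult_le_pos; [nra|nra]).
      assert (Hq : k * v * (1 + v) <= 1) by
        (assert (v * (1 + v) <= a ^ 2 + a) by nra; nra).
      assert (Hq2 : 2 * k <= k * v * (1 + v)) by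
        (assert (2 <= v * (1 + v)) by nra; nra).
      assert (E : (v - k * (v ^ 3 - v)) - 1 = (v - 1) * (1 - k * v * (1 + v))) by ring.
      split; [split|].
      + assert (0 <= (v - 1) * (1 - k * v * (1 + v))) by (apply Rmult_le_pos; lra).
        lra.
      + assert (v - k * (v ^ 3 - v) = v - k * v * (v * v - 1)) by ring. lra.
      + rewrite E. simpl.
        assert ((v - 1) * (1 - k * v * (1 + v)) <= (v - 1) * (1 - 2 * k)) by
          (apply Rmult_le_compat_l; lra).
        assert ((v - 1) * (1 - 2 * k) <=
                ((1 - 2 * k) ^ n * (a - 1)) * (1 - 2 * k)) by
          (apply Rmult_le_compat_r; lra).
        lra. }
  intros n. destruct (Hinv n) as [[H1 H2] H3]. split.
  - rewrite Hrec. set (v := u n) in *.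
    assert (0 <= k * v * (v * v - 1)) by (apply Rmult_le_pos; nra).
    assert (v - k * (v ^ 3 - v) = v - k * v * (v * v - 1)) by ring. lra.
  - rewrite Rabs_right by lra. lra.
Qed.

Theorem theorem2p2 (eps u0 : R) (Heps : 0 < eps < 1) :
  ((u0 = 0 \/ u0 = 1 \/ u0 = -1) ->
     forall h : R, 0 < h ->
     forall n : nat, (1 <= n)%nat -> euler eps h u0 n = sign u0)
  /\
  (~ (u0 = 0 \/ u0 = 1 \/ u0 = -1) ->
     0 < hstar u0 eps /\
     forall h : R, 0 < h <= hstar u0 eps ->
       (Un_growing (euler eps h u0) \/ Un_decreasing (euler eps h u0)) /\
       Un_cv (euler eps h u0) (sign u0)).
Proof.
  assert (He2 : 0 < eps ^ 2) by (apply pow_lt; lra).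
  split.
  - intros Hu h Hh n _.
    assert (Hfix : forall n, euler eps h u0 n = u0).
    { induction n0 as [|n0 IH]; simpl; [reflexivity|].
      rewrite IH. destruct Hu as [-> | [-> | ->]]; ring. }
    rewrite Hfix. unfold sign.
    destruct Hu as [-> | [-> | ->]];
      repeat destruct Rlt_dec; lra.
  - intros Hu.
    assert (Hrec : forall h n, euler eps h u0 (S n) =
       euler eps h u0 n - h / eps ^ 2 * (euler eps h u0 n ^ 3 - euler eps h u0 n))
      by reflexivity.
    assert (Hcase : u0 < -1 \/ (-1 < u0 < 0) \/ (0 < u0 < 1) \/ 1 < u0).
    { destruct (Rtotal_order u0 (-1)) as [?|[?|?]]; [|tauto|];
      destruct (Rtotal_order u0 0) as [?|[?|?]]; try tauto;
      destruct (Rtotal_order u0 1) as [?|[?|?]]; try tauto; lra. }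
    split.
    + unfold hstar. destruct Rlt_dec.
      * apply Rdiv_lt_0_compat; [lra|]. pose proof (Rabs_pos u0). nra.
      * lra.
    + intros h [Hh Hhs].
      set (k := h / eps ^ 2).
      assert (Hk : 0 < k) by (apply Rdiv_lt_0_compat; lra).
      assert (Hkb : forall D, 0 < D -> h <= eps ^ 2 / D -> k * D <= 1).
      { intros D HD Hle. unfold k.
        apply (Rmult_le_compat_r D) in Hle; [|lra].
        replace (eps ^ 2 / D * D) with (eps ^ 2) in Hle by (field; lra).
        replace (h / eps ^ 2 * D) with ((h * D) / eps ^ 2) by (field; lra).
        apply (Rmult_le_reg_r (eps ^ 2)); [lra|].
        replace (h * D / eps ^ 2 * eps ^ 2) with (h * D) by (field; lra). lra. }
      unfold hstar in Hhs. unfold sign.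
      destruct Hcase as [Hc|[Hc|[Hc|Hc]]].
      *
        rewrite Rabs_left in Hhs by lra.
        destruct Rlt_dec as [Hd|Hd]; [|lra].
        destruct Rlt_dec; [lra|]. destruct Rlt_dec; [|lra].
        assert (HD := Hkb (u0 ^ 2 + - u0) ltac:(nra) Hhs).
        pose proof (large_case (fun n => - euler eps h u0 n) k Hk
          ltac:(intros m; cbv beta; rewrite Hrec; fold k; ring) ltac:(simpl; lra)
          ltac:(simpl; replace ((- u0) ^ 2 + - u0) with (u0 ^ 2 + - u0) by ring; lra)) as L.
        split.
        -- left. intros j. destruct (L j) as [L1 _]. cbv beta in L1. lra.
        -- apply (geo_cv _ _ (1 - 2 * k) (- euler eps h u0 0 - 1)).
           ++ assert (2 <= u0 ^ 2 + - u0) by nra. nra.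
           ++ intros j. destruct (L j) as [_ L2].
              replace (euler eps h u0 j - -1) with (- (- euler eps h u0 j - 1)) by ring.
              rewrite Rabs_Ropp. exact L2.
      *
        destruct Rlt_dec as [Hd|Hd]; [rewrite Rabs_left in Hd; lra|].
        destruct Rlt_dec; [lra|]. destruct Rlt_dec; [|lra].
        assert (HD := Hkb 2 ltac:(lra) Hhs).
        pose proof (small_case (fun n => - euler eps h u0 n) k Hk ltac:(lra)
          ltac:(intros m; cbv beta; rewrite Hrec; fold k; ring) ltac:(simpl; lra)) as L.
        split.
        -- right. intros j. destruct (L j) as [[_ L1] _]. cbv beta in L1. lra.
        -- eapply geo_cv; [|intros j; destruct (L j) as [_ L2];
              replace (euler eps h u0 j - -1) with (- (- euler eps h u0 j - 1)) by ring;
              rewrite Rabs_Ropp; exact L2].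
           simpl. split; [|nra]. assert (- u0 * (1 + - u0) < 2) by nra. nra.
      *
        destruct Rlt_dec as [Hd|Hd]; [rewrite Rabs_right in Hd; lra|].
        destruct Rlt_dec; [|lra].
        assert (HD := Hkb 2 ltac:(lra) Hhs).
        pose proof (small_case (euler eps h u0) k Hk ltac:(lra)
          ltac:(intros m; cbv beta; rewrite Hrec; fold k; ring) ltac:(simpl; lra)) as L.
        split.
        -- left. intros j. destruct (L j) as [[_ L1] _]. exact L1.
        -- eapply geo_cv; [|intros j; destruct (L j) as [_ L2]; exact L2].
           simpl. split; [|nra]. assert (u0 * (1 + u0) < 2) by nra. nra.
      *
        rewrite Rabs_right in Hhs by lra.
        destruct Rlt_dec as [Hd|Hd]; [|lra].
        destruct Rlt_dec; [|lra].
        assert (HD := Hkb (u0 ^ 2 + u0) ltac:(nra) Hhs).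
        pose proof (large_case (euler eps h u0) k Hk
          ltac:(intros m; cbv beta; rewrite Hrec; fold k; ring) ltac:(simpl; lra)
          ltac:(simpl; lra)) as L.
        split.
        -- right. intros j. destruct (L j) as [L1 _]. exact L1.
        -- apply (geo_cv _ _ (1 - 2 * k) (euler eps h u0 0 - 1)).
           ++ assert (2 <= u0 ^ 2 + u0) by nra. simpl. nra.
           ++ intros j. destruct (L j) as [_ L2]. exact L2.
Qed.
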